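(* Let $N_1$ and $N_2$ be phylogenetic networks on the same set $S$ of taxa, and assume that either (a) $N_1$ and $N_2$ are both tree-child, or (b) $N_1$ and $N_2$ are both semi-binary, time consistent and tree-sibling. Then $\Upsilon(N_1)=\Upsilon(N_2)$ implies $N_1\cong N_2$. Consequently $m(N_1,N_2)=\frac12|\Upsilon(N_1)\bigtriangleup\Upsilon(N_2)|$ is a metric on the class of tree-child phylogenetic networks on $S$ and on the class of semi-binary time consistent tree-sibling phylogenetic networks on $S$.
   Context: A phylogenetic network on a finite set $S$ of taxa is a finite rooted directed acyclic graph whose leaves (nodes without children) are bijectively labeled by $S$; isomorphism $\cong$ means a digraph isomorphism preserving leaf labels. A tree node has at most one parent; a hybrid node has more than one parent. Two children of a common parent are siblings. $N$ is tree-child if every internal node has a child that is a tree node; tree-sibling if every hybrid node has a sibling that is a tree node; semi-binary if every hybrid node has exactly two parents; time consistent if there is a map $\tau:V\to\mathbb N$ with $\tau(u)<\tau(v)$ for every arc $(u,v)$ with $v$ a tree node and $\tau(u)=\tau(v)$ for every arc $(u,v)$ with $v$ hybrid. The height of a node is the largest length of a path from it to a leaf. The nested label $\ell(v)$ is defined inductively: $\ell(v)=\{i\}$ if $v$ is the leaf labeled $i$, and otherwise $\ell(v)$ is the multiset $\{\ell(v_1),\dots,\ell(v_k)\}$ of nested labels of the children $v_1,\dots,v_k$ of $v$. $\Upsilon(N)$ is the multiset of nested labels of all nodes of $N$; $|\cdot|$ of a multiset is the sum of multiplicities and $\bigtriangleup$ is multiset symmetric difference (multiplicity $|M_1(x)-M_2(x)|$).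 *)

(* Defs.v *)
From mathcomp Require Import all_boot all_order all_algebra.
Set Implicit Arguments. Unset Strict Implicit. Unset Printing Implicit Defensive.
Import GRing.Theory Num.Theory.

Record phylo_network (S : finType) := PhyloNetwork {
  node : finType;
  arc : rel node;
  root : node;
  taxon : S -> node;
  arc_acyclic : forall u v, arc u v -> ~~ connect arc v u;
  root_noparent : forall u, ~~ arc u root;
  root_reach : forall v, connect arc root v;
  taxon_inj : injective taxon;
  taxon_leaves : forall v, (forall w, ~~ arc v w) <-> (exists i, taxon i = v)
}.

Arguments arc {S} _ _ _.
Arguments root {S} _.
Arguments taxon {S} _ _.

Section Defs.
Variable S : finType.
Implicit Types N : phylo_network S.

Definition parents N (v : node N) : {set node N} := [set u | arc N u v].
Definition children N (v : node N) : {set node N} := [set w | arc N v w].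
Definition is_leaf N (v : node N) : bool := children v == set0.
Definition is_tree_node N (v : node N) : bool := #|parents v| <= 1.
Definition is_hybrid N (v : node N) : bool := 1 < #|parents v|.

Definition tree_child N : Prop :=
  forall v : node N, ~~ is_leaf v -> exists w, arc N v w /\ is_tree_node w.

Definition tree_sibling N : Prop :=
  forall v : node N, is_hybrid v ->
    exists u w, [/\ arc N u v, arc N u w, w != v & is_tree_node w].

Definition semi_binary N : Prop :=
  forall v : node N, is_hybrid v -> #|parents v| = 2.

Definition time_consistent N : Prop :=
  exists tau : node N -> nat, forall u v, arc N u v ->
    (is_tree_node v -> tau u < tau v) /\ (is_hybrid v -> tau u = tau v).

Definition sb_tc_ts N : Prop :=
  [/\ semi_binary N, time_consistent N & tree_sibling N].

Definition net_iso N1 N2 : Prop :=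
  exists f : node N1 -> node N2,
    [/\ bijective f,
        forall u v, arc N2 (f u) (f v) = arc N1 u v
      & forall i, f (taxon N1 i) = taxon N2 i].

(* A nested label is represented by a canonical finite tree:
   GenTree.Leaf i  stands for {i}, and  GenTree.Node 0 s  stands for the
   multiset of the elements of s, where s is kept sorted w.r.t. a fixed total
   order (the injective countType encoding), so that two nested labels are
   equal as nested multisets iff their representations are (Leibniz) equal. *)
Definition nlabel := GenTree.tree S.
Definition nl_le (a b : nlabel) : bool := pickle a <= pickle b.

Definition taxon_of N (v : node N) : option S := [pick i | taxon N i == v].

(* l(v) computed with fuel n; fuel #|node N| is enough since N is a DAG. *)
Fixpoint nlabel_rec N (n : nat) (v : node N) : nlabel :=
  match taxon_of v with
  | Some i => GenTree.Leaf i
  | None =>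
    match n with
    | 0 => GenTree.Node 0 [::]
    | n'.+1 => GenTree.Node 0
        (sort nl_le [seq nlabel_rec n' w | w <- enum (children v)])
    end
  end.

Definition nested_label N (v : node N) : nlabel := nlabel_rec #|node N| v.

(* Upsilon(N): the multiset of nested labels of all nodes, as a sequence
   (multiset equality = perm_eq). *)
Definition Upsilon N : seq nlabel := [seq nested_label v | v <- enum (node N)].

Definition msymdiff_size (M1 M2 : seq nlabel) : nat :=
  \sum_(x <- undup (M1 ++ M2))
     ((count_mem x M1 - count_mem x M2) + (count_mem x M2 - count_mem x M1)).

Definition mu_dist N1 N2 : rat :=
  ((msymdiff_size (Upsilon N1) (Upsilon N2))%:R / 2)%R.

Definition metric_on (C : phylo_network S -> Prop)
    (d : phylo_network S -> phylo_network S -> rat) : Prop :=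
  forall N1 N2 N3, C N1 -> C N2 -> C N3 ->
    [/\ (0 <= d N1 N2)%R,
        d N1 N2 = 0%R <-> net_iso N1 N2,
        d N1 N2 = d N2 N1
      & (d N1 N3 <= d N1 N2 + d N2 N3)%R].

End Defs.

(* Main.v *)
Require Import Defs.
From mathcomp Require Import all_boot all_order all_algebra.
From mathcomp Require Import zify.
Notation arc := Defs.arc.
Set Implicit Arguments. Unset Strict Implicit. Unset Printing Implicit Defensive.

Section Net.
Variable S : finType.
Variable N : phylo_network S.
Local Notation V := (node N).

Definition desc (v : V) : {set V} := [set w | connect (arc N) v w].
Definition Dn (v : V) := #|desc v|.

Lemma Dn_gt0 v : 0 < Dn v.
Proof. by apply/card_gt0P; exists v; rewrite inE connect0. Qed.

Lemma Dn_le v : Dn v <= #|V|.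
Proof. exact: max_card. Qed.

Lemma Dn_arc u v : arc N u v -> Dn v < Dn u.
Proof.
move=> uv; apply: proper_card; apply/properP; split.
  by apply/subsetP => x; rewrite !inE => h; apply: connect_trans (connect1 uv) h.
by exists u; rewrite inE ?connect0 //; apply: arc_acyclic.
Qed.

Lemma taxon_ofP (v : V) i : taxon_of v = Some i -> taxon N i = v.
Proof. by rewrite /taxon_of; case: pickP => // j /eqP h [<-]. Qed.

Lemma taxon_of_taxon i : taxon_of (taxon N i) = Some i.
Proof.
rewrite /taxon_of; case: pickP => [j /eqP /taxon_inj -> //|/(_ i)].
by rewrite eqxx.
Qed.

Lemma taxon_of_None (v : V) : taxon_of v = None -> exists w, arc N v w.
Proof.
move=> h; case: (boolP [exists w, arc N v w]) => [/existsP //|/existsPn H].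
have [i hi] := (proj1 (taxon_leaves v)) H.
by move: h; rewrite -hi taxon_of_taxon.
Qed.

Lemma taxon_noarc (v w : V) i : taxon_of v = Some i -> ~~ arc N v w.
Proof.
move=> h; have hv := taxon_ofP h.
by apply: (proj2 (taxon_leaves v)); exists i.
Qed.

Lemma nlr_taxon m (v : V) i : taxon_of v = Some i -> nlabel_rec m v = GenTree.Leaf i.
Proof. by move=> h; case: m => [|m] /=; rewrite h. Qed.

Lemma nlr_S m (v : V) : taxon_of v = None ->
  nlabel_rec m.+1 v = GenTree.Node 0 (sort (@nl_le S) [seq nlabel_rec m w | w <- enum (children v)]).
Proof. by move=> h /=; rewrite h. Qed.

Lemma nlr_0 (v : V) : taxon_of v = None -> nlabel_rec 0 v = GenTree.Node 0 [::].
Proof. by move=> h /=; rewrite h. Qed.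

Lemma nlr_stab m (v : V) : Dn v <= m -> nlabel_rec m.+1 v = nlabel_rec m v.
Proof.
elim: m v => [|m IH] v hD.
  by have := Dn_gt0 v; lia.
case h: (taxon_of v) => [i|].
  by rewrite !(nlr_taxon _ h).
rewrite !nlr_S //; congr (GenTree.Node 0 (sort _ _)).
apply/eq_in_map => w; rewrite mem_enum inE => hw; apply: IH.
by have := Dn_arc hw; lia.
Qed.

Lemma nlr_stab' m k (v : V) : Dn v <= m -> nlabel_rec (m + k) v = nlabel_rec m v.
Proof.
move=> h; elim: k => [|k IH]; first by rewrite addn0.
by rewrite addnS nlr_stab ?IH //; apply: leq_trans h (leq_addr _ _).
Qed.

Lemma nl_eq m (v : V) : Dn v <= m -> nlabel_rec m v = nested_label v.
Proof.
move=> h; rewrite /nested_label.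
case: (leqP m #|V|) => hm.
  by rewrite -(subnKC hm) nlr_stab'.
by rewrite -(subnKC (ltnW hm)) nlr_stab' // Dn_le.
Qed.

Lemma nl_leaf (v : V) i : taxon_of v = Some i -> nested_label v = GenTree.Leaf i.
Proof. exact: nlr_taxon. Qed.

Lemma nl_node (v : V) : taxon_of v = None ->
  nested_label v = GenTree.Node 0 (sort (@nl_le S) [seq nested_label w | w <- enum (children v)]).
Proof.
move=> h.
have [n E] : exists n, #|V| = n.+1.
  by exists #|V|.-1; have := Dn_le v; have := Dn_gt0 v; lia.
transitivity (nlabel_rec n.+1 v); first by rewrite /nested_label E.
rewrite nlr_S //; congr (GenTree.Node 0 (sort _ _)).
apply/eq_in_map => w; rewrite mem_enum inE => hw; apply: nl_eq.
by have := Dn_arc hw; have := Dn_le v; lia.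
Qed.

Definition good := tree_child N \/ (semi_binary N /\ tree_sibling N).

End Net.

Lemma node_perm (S : finType) (s t : seq (nlabel S)) :
  GenTree.Node 0 (sort (@nl_le S) s) = GenTree.Node 0 (sort (@nl_le S) t) -> perm_eq s t.
Proof. by case=> E; rewrite -(perm_sort (@nl_le S) s) E perm_sort. Qed.

Lemma nl_inj (S : finType) (N : phylo_network S) : good N -> injective (@nested_label S N).
Proof.
move=> G.
suff H : forall k (u v : node N), Dn u + Dn v <= k -> nested_label u = nested_label v -> u = v.
  by move=> u v; apply: (H _ u v (leqnn _)).
elim=> [|k IH] u v hk E.
  by have := Dn_gt0 u; lia.
case hu: (taxon_of u) => [i|]; case hv: (taxon_of v) => [j|].
- move: E; rewrite (nl_leaf hu) (nl_leaf hv) => -[ij]; subst j.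
  by rewrite -(taxon_ofP hu) -(taxon_ofP hv).
- by move: E; rewrite (nl_leaf hu) (nl_node hv).
- by move: E; rewrite (nl_node hu) (nl_leaf hv).
move: E; rewrite (nl_node hu) (nl_node hv) => /node_perm P.
have Hc : forall c, arc N u c -> arc N v c.
  move=> c uc.
  have : nested_label c \in [seq nested_label w | w <- enum (children v)].
    by rewrite -(perm_mem P) map_f // mem_enum inE.
  case/mapP => c' hc' Ec; rewrite mem_enum inE in hc'.
  suff -> : c = c' by [].
  by apply: IH Ec; have := Dn_arc uc; have := Dn_arc hc'; lia.
have Hc' : forall c, arc N v c -> arc N u c.
  move=> c vc.
  have : nested_label c \in [seq nested_label w | w <- enum (children u)].
    by rewrite (perm_mem P) map_f // mem_enum inE.
  case/mapP => c' hc' Ec; rewrite mem_enum inE in hc'.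
  suff -> : c = c' by [].
  by apply: IH Ec; have := Dn_arc vc; have := Dn_arc hc'; lia.
case: (eqVneq u v) => // neq; exfalso.
have sub : forall c, arc N u c -> [set u; v] \subset parents c.
  move=> c uc; apply/subsetP => x; rewrite !inE => /orP[] /eqP ->; first by [].
  exact: Hc.
have hyb : forall c, arc N u c -> is_hybrid c.
  move=> c uc; rewrite /is_hybrid; have := subset_leq_card (sub c uc).
  by rewrite cards2 neq.
have [c uc] := taxon_of_None hu.
case: G => [tc | [sb ts]].
  have [|w [uw tw]] := tc u.
    by rewrite /is_leaf; apply/set0Pn; exists c; rewrite inE.
  by move: (hyb w uw) tw; rewrite /is_hybrid /is_tree_node; lia.
have [p [w [pc pw wc tw]]] := ts c (hyb c uc).
have Ec : parents c = [set u; v].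
  apply/eqP; rewrite eq_sym eqEcard sub // cards2 neq sb //; exact: hyb.
have : p \in parents c by rewrite inE.
rewrite Ec !inE => /orP[] /eqP Ep; subst p.
  by move: (hyb w pw) tw; rewrite /is_hybrid /is_tree_node; lia.
by move: (hyb w (Hc' w pw)) tw; rewrite /is_hybrid /is_tree_node; lia.
Qed.

Lemma nl_arc (S : finType) (N1 N2 : phylo_network S) (h : node N1 -> node N2) :
  good N2 -> (forall u, nested_label (h u) = nested_label u) ->
  forall u v, arc N1 u v -> arc N2 (h u) (h v).
Proof.
move=> G Hh u v uv.
have hu : taxon_of u = None.
  case E: (taxon_of u) => [i|] //; by move: (taxon_noarc v E); rewrite uv.
have hhu : taxon_of (h u) = None.
  case E: (taxon_of (h u)) => [i|] //.
  by move: (Hh u); rewrite (nl_leaf E) (nl_node hu).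
have := Hh u; rewrite (nl_node hu) (nl_node hhu) => /node_perm P.
have : nested_label v \in [seq nested_label w | w <- enum (children (h u))].
  by rewrite (perm_mem P) map_f // mem_enum inE.
case/mapP => c hc Ec; rewrite mem_enum inE in hc.
suff -> : h v = c by [].
by apply: (nl_inj G); rewrite Hh.
Qed.

Lemma pick_fun (S : finType) (N1 N2 : phylo_network S) :
  (forall u : node N1, exists y : node N2, nested_label y = nested_label u) ->
  exists f : node N1 -> node N2, forall u, nested_label (f u) = nested_label u.
Proof.
move=> Hs.
exists (fun u => odflt (Defs.root N2) [pick y | nested_label y == nested_label u]).
move=> u; case: pickP => [y /eqP //|H].
by case: (Hs u) => y E; move: (H y); rewrite E eqxx.
Qed.

Lemma Ups_sub (S : finType) (N1 N2 : phylo_network S) :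
  perm_eq (Upsilon N1) (Upsilon N2) ->
  forall u : node N1, exists y : node N2, nested_label y = nested_label u.
Proof.
move=> P u.
have : nested_label u \in Upsilon N2.
  by rewrite -(perm_mem P) /Upsilon map_f // mem_enum.
by case/mapP => y _ E; exists y.
Qed.

Lemma iso_of_perm (S : finType) (N1 N2 : phylo_network S) :
  good N1 -> good N2 -> perm_eq (Upsilon N1) (Upsilon N2) -> net_iso N1 N2.
Proof.
move=> G1 G2 P.
have [f Hf] := pick_fun (Ups_sub P).
have P' : perm_eq (Upsilon N2) (Upsilon N1) by rewrite perm_sym.
have [g Hg] := pick_fun (Ups_sub P').
have gf : cancel f g by move=> u; apply: (nl_inj G1); rewrite Hg Hf.
have fg : cancel g f by move=> y; apply: (nl_inj G2); rewrite Hf Hg.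
exists f; split.
- by exists g.
- move=> u v; apply/idP/idP => h.
    by rewrite -(gf u) -(gf v); apply: (nl_arc G1 Hg).
  exact: (nl_arc G2 Hf).
- move=> i; apply: (nl_inj G2).
  by rewrite Hf (nl_leaf (taxon_of_taxon N1 i)) (nl_leaf (taxon_of_taxon N2 i)).
Qed.

Lemma perm_of_iso (S : finType) (N1 N2 : phylo_network S) :
  net_iso N1 N2 -> perm_eq (Upsilon N1) (Upsilon N2).
Proof.
case=> f [fb farc ftax].
have [g gf fg] := fb.
have card := bij_eq_card fb.
have tof : forall u, taxon_of (f u) = taxon_of u.
  move=> u; rewrite /taxon_of; apply: eq_pick => i /=.
  by rewrite -ftax (bij_eq fb).
have srt : forall s t : seq (nlabel S), perm_eq s t -> sort (@nl_le S) s = sort (@nl_le S) t.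
  move=> s t; move/perm_sortP; apply.
  - by move=> a b; apply: leq_total.
  - by move=> a b c; apply: leq_trans.
  - by move=> a b /andP[h1 h2]; apply: (pcan_inj pickleK); apply/eqP; rewrite eqn_leq; exact/andP.
have chl : forall u, perm_eq (enum (children (f u))) (map f (enum (children u))).
  move=> u; apply: uniq_perm; first exact: enum_uniq.
    by rewrite map_inj_uniq ?enum_uniq //; apply: bij_inj.
  move=> x; rewrite mem_enum inE; apply/idP/mapP.
    by move=> h; exists (g x); rewrite ?fg // mem_enum inE -farc fg.
  by case=> y; rewrite mem_enum inE => h ->; rewrite farc.
have nlf : forall m u, nlabel_rec m (f u) = nlabel_rec m u.
  elim=> [|m IH] u; case E: (taxon_of u) => [i|]; have Ef := etrans (tof u) E.
  - by rewrite (nlr_taxon _ E) (nlr_taxon _ Ef).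
  - by rewrite (nlr_0 E) (nlr_0 Ef).
  - by rewrite (nlr_taxon _ E) (nlr_taxon _ Ef).
  rewrite (nlr_S _ E) (nlr_S _ Ef); congr (GenTree.Node 0 _); apply: srt.
  apply: perm_trans (perm_map _ (chl u)) _; rewrite -map_comp.
  by rewrite (@eq_map _ _ (nlabel_rec m \o f) (nlabel_rec m)) ?perm_refl // => w; exact: IH.
have nlf' : forall u, nested_label (f u) = nested_label u.
  by move=> u; rewrite /nested_label -card nlf.
have E2 : perm_eq (map f (enum (node N1))) (enum (node N2)).
  apply: uniq_perm; last by move=> x; rewrite mem_enum; apply/mapP; exists (g x); rewrite ?mem_enum ?fg.
    by rewrite map_inj_uniq ?enum_uniq //; apply: bij_inj.
  exact: enum_uniq.
rewrite /Upsilon; apply: perm_trans _ (perm_map (@nested_label S N2) E2).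
suff -> : [seq nested_label i | i <- [seq f i | i <- enum (node N1)]] = [seq nested_label i | i <- enum (node N1)] by [].
by rewrite -map_comp; apply: eq_map => x; exact: nlf'.
Qed.

Definition Fd (S : finType) (M1 M2 : seq (nlabel S)) x :=
  (count_mem x M1 - count_mem x M2) + (count_mem x M2 - count_mem x M1).

Lemma ms_any (S : finType) (M1 M2 U : seq (nlabel S)) :
  uniq U -> {subset M1 ++ M2 <= U} -> msymdiff_size M1 M2 = \sum_(x <- U) Fd M1 M2 x.
Proof.
move=> uU sub.
rewrite (bigID (fun x => x \in M1 ++ M2)) /= [X in _ + X]big1 ?addn0; last first.
  move=> x; rewrite mem_cat negb_or => /andP[h1 h2].
  by rewrite /Fd !(count_memPn h1) !(count_memPn h2).
rewrite -big_filter /msymdiff_size /Fd; apply: perm_big.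
apply: uniq_perm; [exact: undup_uniq | exact: filter_uniq |].
move=> x; rewrite mem_undup mem_filter.
by case: (boolP (x \in M1 ++ M2)) => // /sub ->.
Qed.

Lemma ms_sym (S : finType) (M1 M2 : seq (nlabel S)) :
  msymdiff_size M1 M2 = msymdiff_size M2 M1.
Proof.
have u := undup_uniq (M1 ++ M2).
rewrite (ms_any u) ?(ms_any (M1:=M2) (M2:=M1) u).
- by apply: eq_bigr => x _; rewrite /Fd addnC.
- by move=> x; rewrite mem_undup !mem_cat orbC.
- by move=> x; rewrite mem_undup.
Qed.

Lemma ms_tri (S : finType) (M1 M2 M3 : seq (nlabel S)) :
  msymdiff_size M1 M3 <= msymdiff_size M1 M2 + msymdiff_size M2 M3.
Proof.
have u := undup_uniq (M1 ++ M2 ++ M3).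
rewrite (ms_any (M1:=M1) (M2:=M3) u); last first.
  by move=> x; rewrite mem_undup !mem_cat => /orP[] ->; rewrite ?orbT.
rewrite (ms_any (M1:=M1) (M2:=M2) u); last first.
  by move=> x; rewrite mem_undup !mem_cat => /orP[] ->; rewrite ?orbT.
rewrite (ms_any (M1:=M2) (M2:=M3) u); last first.
  by move=> x; rewrite mem_undup !mem_cat => /orP[] ->; rewrite ?orbT.
rewrite -big_split; apply: leq_sum => x _; rewrite /Fd /=; lia.
Qed.

Lemma ms0 (S : finType) (M1 M2 : seq (nlabel S)) :
  (msymdiff_size M1 M2 == 0) = perm_eq M1 M2.
Proof.
rewrite /msymdiff_size sum_nat_seq_eq0 /perm_eq.
apply/allP/allP => H x hx.
  have := H x; rewrite mem_undup => /(_ hx) /= /eqP h; apply/eqP; lia.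
rewrite mem_undup in hx; have := H x hx; rewrite /= => /eqP ->.
by rewrite subnn.
Qed.

Section Metric.
Import GRing.Theory Num.Theory.
Local Open Scope ring_scope.

Lemma metric_gen (S : finType) (C : phylo_network S -> Prop) :
  (forall N1 N2, C N1 -> C N2 -> perm_eq (Upsilon N1) (Upsilon N2) -> net_iso N1 N2) ->
  metric_on C (@mu_dist S).
Proof.
move=> H N1 N2 N3 h1 h2 h3; split.
- by rewrite /mu_dist divr_ge0 ?ler0n.
- split => [E|I].
    apply: H => //; rewrite -ms0.
    by move/eqP: E; rewrite /mu_dist mulf_eq0 invr_eq0 !pnatr_eq0 orbF.
  have E : msymdiff_size (Upsilon N1) (Upsilon N2) = 0%N by apply/eqP; rewrite ms0 perm_of_iso.
  by rewrite /mu_dist E mul0r.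
- by rewrite /mu_dist ms_sym.
- rewrite /mu_dist -mulrDl ler_pM2r ?invr_gt0 // -natrD ler_nat; exact: ms_tri.
Qed.
End Metric.

Theorem corollary3 (S : finType) :
  (forall N1 N2 : phylo_network S,
      (tree_child N1 /\ tree_child N2) \/ (sb_tc_ts N1 /\ sb_tc_ts N2) ->
      perm_eq (Upsilon N1) (Upsilon N2) -> net_iso N1 N2)
  /\ metric_on (@tree_child S) (@mu_dist S)
  /\ metric_on (@sb_tc_ts S) (@mu_dist S).
Proof.
have A : forall N1 N2 : phylo_network S,
      (tree_child N1 /\ tree_child N2) \/ (sb_tc_ts N1 /\ sb_tc_ts N2) ->
      perm_eq (Upsilon N1) (Upsilon N2) -> net_iso N1 N2.
  move=> N1 N2 [[t1 t2]|[[s1 c1 ts1] [s2 c2 ts2]]] P; apply: iso_of_perm => //;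
    by [left | right].
split; first exact: A.
split; apply: metric_gen => N1 N2 h1 h2; apply: A; by [left | right].
Qed.
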